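(* Let $r\ge1$ and let $\tau$ be a permutation of $F^r$ fixing $\mathbf 0$. The groups $\mathrm{PAut}(S_\tau)$ and $\mathrm{Aut}(SQS_\tau)$ are isomorphic.
   Context: $F=\mathrm{GF}(2)$, $\mathbf 0$ is the all-zero vector. Index the coordinates of $F^{2^r}$ by the vectors of $F^r$; $e_a$ is the unit vector with a single $1$ at position $a$. The extended Hamming code is $\mathcal H=\{x\in F^{2^r}:\sum_{a:x_a=1}a=\mathbf 0,\ \mathrm{wt}(x)\text{ even}\}$. For $x,y\in F^{2^r}$, $x|y$ is the concatenation and $C\times D=\{x|y:x\in C,y\in D\}$. Define $S_\tau=\bigcup_{a\in F^r}(\mathcal H+e_a+e_{\mathbf 0})\times(\mathcal H+e_{\tau(a)}+e_{\tau(\mathbf 0)})\subseteq F^{2^{r+1}}$. $\mathrm{PAut}(S_\tau)$ is the group of permutations $\pi$ of the coordinate positions with $\pi(S_\tau)=S_\tau$ (where $\pi(y)_i=y_{\pi^{-1}(i)}$). The coordinate positions of $F^{2^{r+1}}$ are denoted $(\{a\},\emptyset)$ (position $a$ in the first half) and $(\emptyset,\{a\})$ (second half). $SQS_\tau$ is the Steiner quadruple system on these positions consisting of $Q_0=\{(\{a,b,c,d\},\emptyset): a,b,c,d \text{ pairwise distinct}, a+b+c+d=\mathbf 0\}$, $Q_1=\{(\emptyset,\{a,b,c,d\}): a,b,c,d \text{ pairwise distinct}, a+b+c+d=\mathbf 0\}$ and $Q_\tau=\{(\{a,c\},\{b,d\}):\tau(a+c)=b+d\neq\mathbf 0\}$,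 where $(X,Y)$ denotes the set of positions $\{(\{x\},\emptyset):x\in X\}\cup\{(\emptyset,\{y\}):y\in Y\}$. $\mathrm{Aut}(SQS_\tau)$ is the group of permutations of positions preserving the set of quadruples. *)

(* Defs.v *)
From mathcomp Require Import all_boot all_order all_fingroup all_algebra.
Set Implicit Arguments. Unset Strict Implicit. Unset Printing Implicit Defensive.
Import GRing.Theory.
Local Open Scope ring_scope.

Notation V r := 'rV['F_2]_r.
(* coordinate positions of F^{2^{r+1}}: inl a = ({a},∅), inr a = (∅,{a}) *)
Notation Pos r := (V r + V r)%type.

(* words of F^{2^r} (coordinates indexed by F^r) and of F^{2^{r+1}} *)
Notation word r := {ffun V r -> 'F_2}.
Notation word2 r := {ffun Pos r -> 'F_2}.

Definition unitw (r : nat) (a : V r) : word r := [ffun b => (b == a)%:R].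

Definition Hcode (r : nat) : {set word r} :=
  [set x : word r | ((\sum_(a : V r | x a == 1) a) == 0)
                    && ~~ odd #|[set a : V r | x a == 1]| ].

Definition Hcoset (r : nat) (a b : V r) : {set word r} :=
  [set x + unitw a + unitw b | x : word r in Hcode r].

Definition concat (r : nat) (x y : word r) : word2 r :=
  [ffun i => match i with inl a => x a | inr b => y b end].

Definition Stau (r : nat) (tau : {perm V r}) : {set word2 r} :=
  \bigcup_(a : V r)
    [set concat x y | x in Hcoset a 0, y in Hcoset (tau a) (tau 0)].

Definition permw (r : nat) (pi : {perm Pos r}) (y : word2 r) : word2 r :=
  [ffun i => y ((pi^-1)%g i)].

Definition PAut (r : nat) (C : {set word2 r}) : {set {perm Pos r}} :=
  [set pi : {perm Pos r} | [set permw pi y | y in C] == C].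

Definition isQ0 (r : nat) (Q : {set Pos r}) : bool :=
  [exists a : V r, exists b : V r, exists c : V r, exists d : V r,
    [&& [&& a != b, a != c, a != d, b != c, b != d & c != d],
        a + b + c + d == 0 &
        Q == [set (inl a : Pos r); inl b; inl c; inl d]]].

Definition isQ1 (r : nat) (Q : {set Pos r}) : bool :=
  [exists a : V r, exists b : V r, exists c : V r, exists d : V r,
    [&& [&& a != b, a != c, a != d, b != c, b != d & c != d],
        a + b + c + d == 0 &
        Q == [set (inr a : Pos r); inr b; inr c; inr d]]].

Definition isQtau (r : nat) (tau : {perm V r}) (Q : {set Pos r}) : bool :=
  [exists a : V r, exists c : V r, exists b : V r, exists d : V r,
    [&& tau (a + c) == b + d, b + d != 0 &
        Q == [set (inl a : Pos r); inl c; inr b; inr d]]].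

Definition SQS (r : nat) (tau : {perm V r}) : {set {set Pos r}} :=
  [set Q : {set Pos r} | [|| isQ0 Q, isQ1 Q | isQtau tau Q]].

Definition AutSys (r : nat) (B : {set {set Pos r}}) : {set {perm Pos r}} :=
  [set pi : {perm Pos r} | [set (pi @: Q) | Q : {set Pos r} in B] == B].

(* Main.v *)
Require Import Defs.
From mathcomp Require Import all_boot all_order all_fingroup all_algebra.
From mathcomp Require Import zify.
Set Implicit Arguments. Unset Strict Implicit. Unset Printing Implicit Defensive.
Import GRing.Theory.
Local Open Scope ring_scope.


Lemma F2_cases (x : 'F_2) : x = 0 \/ x = 1.
Proof. by case: x => [[|[|//]]] Hx; [left|right]; apply/val_inj. Qed.

Lemma F2_addxx (x : 'F_2) : x + x = 0.
Proof. by case: (F2_cases x) => ->; apply/val_inj. Qed.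

Lemma F2_10 : (1 : 'F_2) != 0. Proof. by []. Qed.

Lemma F2_nat n : (n%:R : 'F_2) = (odd n)%:R.
Proof. by rewrite -(@Fp_nat_mod 2) // modn2. Qed.

Lemma F2_nat0 n : ((n%:R : 'F_2) == 0) = ~~ odd n.
Proof. by rewrite F2_nat; case: (odd n). Qed.

Lemma V_addxx r (v : V r) : v + v = 0.
Proof. by apply/rowP => i; rewrite !mxE F2_addxx. Qed.

Section Gen.
Variable T : finType.
Definition ind (A : {set T}) : {ffun T -> 'F_2} := [ffun i => (i \in A)%:R].
Definition e (a : T) : {ffun T -> 'F_2} := [ffun i => (i == a)%:R].
Definition supp (w : {ffun T -> 'F_2}) : {set T} := [set i | w i != 0].

Lemma ind_supp w : ind (supp w) = w.
Proof.
apply/ffunP => i; rewrite !ffunE inE.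
by case: (F2_cases (w i)) => ->.
Qed.

Lemma supp_ind A : supp (ind A) = A.
Proof. by apply/setP => i; rewrite !inE ffunE; case: (i \in A). Qed.

Lemma ind_inj : injective ind.
Proof. by move=> A B H; rewrite -(supp_ind A) H supp_ind. Qed.

Lemma ind0 : ind set0 = 0.
Proof. by apply/ffunP => i; rewrite !ffunE inE. Qed.

Lemma ind2 a b : a != b -> ind [set a; b] = e a + e b.
Proof.
move=> ab; apply/ffunP => i; rewrite !ffunE !inE.
case: (eqVneq i a) => [->|]; last by case: (i == b); rewrite /= ?add0r.
rewrite (negbTE ab) /= addr0 //.
Qed.

Lemma ind4 a b c d : [&& a != b, a != c, a != d, b != c, b != d & c != d] ->
  ind [set a; b; c; d] = e a + e b + e c + e d.
Proof.
case/andP => ab /andP [ac /andP [ad /andP [bc /andP [bd cd]]]]; apply/ffunP => i; rewrite !ffunE !inE.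
case: (eqVneq i a) => [->|ia]; first by rewrite (negbTE ab) (negbTE ac) (negbTE ad) !addr0.
case: (eqVneq i b) => [->|ib]; first by rewrite (negbTE bc) (negbTE bd) !addr0 add0r.
case: (eqVneq i c) => [->|ic]; first by rewrite (negbTE cd) !addr0 add0r.
by case: (i == d); rewrite ?add0r.
Qed.

Lemma card4 (a b c d : T) : [&& a != b, a != c, a != d, b != c, b != d & c != d] ->
  #|[set a; b; c; d]| = 4%N.
Proof.
case/andP => ab /andP [ac /andP [ad /andP [bc /andP [bd cd]]]].
rewrite (setUC _ [set d]) (setUC _ [set c]) (setUC [set a]) !cardsU1 cards1 !inE.
by rewrite (eq_sym d c) (eq_sym d b) (eq_sym d a) (eq_sym c b) (eq_sym c a) (eq_sym b a) (negbTE ab) (negbTE ac) (negbTE ad) (negbTE bc) (negbTE bd) (negbTE cd).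
Qed.

Lemma card4P (A : {set T}) : #|A| = 4%N -> exists a b c d,
  [&& a != b, a != c, a != d, b != c, b != d & c != d] /\ A = [set a; b; c; d].
Proof.
move=> HA.
have: (0 < #|A|)%N by rewrite HA. case/card_gt0P => a Ha.
have HA1 : #|A :\ a| = 3%N by rewrite (cardsD1 a A) Ha in HA; case: HA.
have: (0 < #|A :\ a|)%N by rewrite HA1. case/card_gt0P => b Hb.
have HA2 : #|A :\ a :\ b| == 2%N by move: HA1; rewrite (cardsD1 b (A :\ a)) Hb add1n => -[->].
case/cards2P: HA2 => c [d [cd Hcd]].
have : c \in A :\ a :\ b by rewrite Hcd !inE eqxx.
have : d \in A :\ a :\ b by rewrite Hcd !inE eqxx orbT.
rewrite !inE => /and3P [db da dA] /and3P [cb ca cA].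
move: Hb; rewrite !inE => /andP [ba bA].
exists a, b, c, d; split.
  by rewrite eq_sym ba eq_sym ca eq_sym da eq_sym cb eq_sym db cd.
apply/setP => x; rewrite !inE.
case: (eqVneq x a) => [->//|xa] /=.
case: (eqVneq x b) => [->//|xb] /=.
have : (x \in A :\ a :\ b) = (x \in [set c; d]) by rewrite Hcd.
by rewrite !inE xa xb.
Qed.

End Gen.


Lemma w_addxx (T : finType) (w : {ffun T -> 'F_2}) : w + w = 0.
Proof. by apply/ffunP => i; rewrite !ffunE F2_addxx. Qed.

Lemma F2_add0 (x y : 'F_2) : x + y = 0 -> x = y.
Proof. by move=> H; rewrite -[y]add0r -H -addrA F2_addxx addr0. Qed.

Lemma V_add0 r (x y : V r) : x + y = 0 -> x = y.
Proof. by move=> H; rewrite -[y]add0r -H -addrA V_addxx addr0. Qed.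

Lemma w_cancel (T : finType) (h u v : {ffun T -> 'F_2}) : h + u + v + u + v = h.
Proof.
apply/ffunP => i; rewrite !ffunE.
by case: (F2_cases (h i)) => ->; case: (F2_cases (u i)) => ->; case: (F2_cases (v i)) => ->; apply/eqP.
Qed.

Section Vr.
Variable r : nat.

Definition syn (x : word r) : V r := \sum_a x a *: a.
Definition par (x : word r) : 'F_2 := \sum_a x a.
Definition wl (w : word2 r) : word r := [ffun a => w (inl a)].
Definition wr (w : word2 r) : word r := [ffun a => w (inr a)].

Lemma synD x y : syn (x + y) = syn x + syn y.
Proof. by rewrite /syn -big_split; apply: eq_bigr => a _; rewrite ffunE scalerDl. Qed.
Lemma parD x y : par (x + y) = par x + par y.
Proof. by rewrite /par -big_split; apply: eq_bigr => a _; rewrite ffunE. Qed.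
Lemma syn0 : syn 0 = 0.
Proof. by rewrite /syn big1 // => a _; rewrite ffunE scale0r. Qed.
Lemma par0 : par 0 = 0.
Proof. by rewrite /par big1 // => a _; rewrite ffunE. Qed.
Lemma syn_e a : syn (e a) = a.
Proof.
rewrite /syn (bigD1 a) //= ffunE eqxx scale1r big1 ?addr0 // => b ba.
by rewrite ffunE (negbTE ba) scale0r.
Qed.
Lemma par_e a : par (e a) = 1.
Proof.
rewrite /par (bigD1 a) //= ffunE eqxx big1 ?addr0 // => b ba.
by rewrite ffunE (negbTE ba).
Qed.
Lemma wlD w v : wl (w + v) = wl w + wl v.
Proof. by apply/ffunP => a; rewrite !ffunE. Qed.
Lemma wrD w v : wr (w + v) = wr w + wr v.
Proof. by apply/ffunP => a; rewrite !ffunE. Qed.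
Lemma wl0 : wl 0 = 0. Proof. by apply/ffunP => a; rewrite !ffunE. Qed.
Lemma wr0 : wr 0 = 0. Proof. by apply/ffunP => a; rewrite !ffunE. Qed.
Lemma wl_el a : wl (e (inl a)) = e a. Proof. by apply/ffunP => b; rewrite !ffunE. Qed.
Lemma wl_er a : wl (e (inr a)) = 0. Proof. by apply/ffunP => b; rewrite !ffunE. Qed.
Lemma wr_el a : wr (e (inl a)) = 0. Proof. by apply/ffunP => b; rewrite !ffunE. Qed.
Lemma wr_er a : wr (e (inr a)) = e a. Proof. by apply/ffunP => b; rewrite !ffunE. Qed.

Lemma concat_wlr w : concat (wl w) (wr w) = w.
Proof. by apply/ffunP => -[a|a]; rewrite !ffunE. Qed.
Lemma wl_concat x y : wl (concat x y) = x. Proof. by apply/ffunP => a; rewrite !ffunE. Qed.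
Lemma wr_concat x y : wr (concat x y) = y. Proof. by apply/ffunP => a; rewrite !ffunE. Qed.

Lemma unitwE (a : V r) : unitw a = e a. Proof. by []. Qed.

Lemma memH x : (x \in Hcode r) = (syn x == 0) && (par x == 0).
Proof.
rewrite inE; congr (_ && _).
  congr (_ == 0); rewrite /syn big_mkcond /=; apply: eq_bigr => a _.
  by case: (F2_cases (x a)) => ->; rewrite ?scale0r ?scale1r.
rewrite -F2_nat0 /par; congr (_ == 0).
rewrite -sum1_card natr_sum big_mkcond /=; apply: eq_bigr => a _.
by rewrite inE; case: (F2_cases (x a)) => ->.
Qed.

Lemma memHc x a b : (x \in Hcoset a b) = (x + e a + e b \in Hcode r).
Proof.
apply/imsetP/idP => [[h Hh ->]|Hx].
  by rewrite !unitwE w_cancel.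
by exists (x + e a + e b) => //; rewrite !unitwE w_cancel.
Qed.

Definition inS (tau : {perm V r}) (w : word2 r) :=
  [&& par (wl w) == 0, par (wr w) == 0 & syn (wr w) == tau (syn (wl w))].

Lemma memS (tau : {perm V r}) w : tau 0 = 0 -> (w \in Stau tau) = inS tau w.
Proof.
move=> t0; apply/bigcupP/idP => [[a _ /imset2P [x y Hx Hy ->]]|H].
  rewrite /inS wl_concat wr_concat.
  move: Hx Hy; rewrite !memHc !memH !synD !parD !syn_e !par_e t0 !addr0.
  move=> /andP [/eqP/V_add0 -> /eqP Hp] /andP [/eqP/V_add0 -> /eqP Hq].
  move: Hp Hq; rewrite -!addrA F2_addxx !addr0 => -> ->; by rewrite !eqxx.
case/and3P: H => /eqP pl /eqP pr /eqP sr.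
exists (syn (wl w)) => //; rewrite -{1}(concat_wlr w); apply/imset2P.
exists (wl w) (wr w) => //; rewrite memHc memH !synD !parD !syn_e !par_e ?t0 ?sr.
  by rewrite V_addxx pl -addrA F2_addxx !addr0 !eqxx.
by rewrite V_addxx pr -addrA F2_addxx !addr0 !eqxx.
Qed.

End Vr.


Section P.
Variable r : nat.
Implicit Types (pi : {perm Pos r}) (w : word2 r).

Lemma permwD pi w v : permw pi (w + v) = permw pi w + permw pi v.
Proof. by apply/ffunP => i; rewrite !ffunE. Qed.

Lemma permw_ind pi A : permw pi (ind A) = ind (pi @: A).
Proof.
apply/ffunP => i; rewrite !ffunE.
by rewrite -{2}(permKV pi i) mem_imset //; apply: perm_inj.
Qed.

Lemma permwK pi w : permw pi^-1 (permw pi w) = w.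
Proof. by apply/ffunP => i; rewrite !ffunE invgK permK. Qed.

Lemma permw0 pi : permw pi 0 = 0.
Proof. by apply/ffunP => i; rewrite !ffunE. Qed.

Lemma card_supp2 w : #|supp w| = (#|supp (wl w)| + #|supp (wr w)|)%N.
Proof.
rewrite -!sum1_card big_sumType; congr (_ + _)%N; apply: eq_bigl => a;
by rewrite !inE ffunE.
Qed.

Lemma par_card (x : word r) : par x = #|supp x|%:R.
Proof.
rewrite /par -sum1_card natr_sum [RHS]big_mkcond /=; apply: eq_bigr => a _.
by rewrite inE; case: (F2_cases (x a)) => ->.
Qed.

Lemma supp_l w a : (inl a \in supp w) = (a \in supp (wl w)).
Proof. by rewrite !inE ffunE. Qed.
Lemma supp_r w a : (inr a \in supp w) = (a \in supp (wr w)).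
Proof. by rewrite !inE ffunE. Qed.

Lemma wl_ind w : wl w = ind (supp (wl w)). Proof. by rewrite ind_supp. Qed.
Lemma wr_ind w : wr w = ind (supp (wr w)). Proof. by rewrite ind_supp. Qed.

Variable tau : {perm V r}.
Hypothesis t0 : tau 0 = 0.

Lemma tau_eq0 x : (tau x == 0) = (x == 0).
Proof. by rewrite -{1}t0 (inj_eq perm_inj). Qed.

Lemma V_neq a b : (a != b) = (a + b != 0 :> V r).
Proof.
apply/idP/idP; apply: contra => /eqP H; apply/eqP; last by rewrite H V_addxx.
exact: V_add0.
Qed.

Ltac wsimp := rewrite ?wlD ?wrD ?wl_el ?wl_er ?wr_el ?wr_er ?wl0 ?wr0 ?addr0 ?add0r
  ?synD ?parD ?syn_e ?par_e ?syn0 ?par0 ?addr0 ?add0r.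

Lemma encode Q : Q \in SQS tau -> #|Q| = 4%N /\ inS tau (ind Q).
Proof.
rewrite inE => /or3P [] /existsP [a] /existsP [b] /existsP [c] /existsP [d].
- case/and3P => Hd Hs /eqP ->.
  have Hd' : [&& (inl a : Pos r) != inl b, (inl a : Pos r) != inl c, (inl a : Pos r) != inl d,
    (inl b : Pos r) != inl c, (inl b : Pos r) != inl d & (inl c : Pos r) != inl d] by [].
  split; first exact: card4.
  rewrite ind4 // /inS; wsimp.
  rewrite (eqP Hs) t0 eqxx.
  by rewrite -!addrA F2_addxx addr0 F2_addxx !eqxx.
- case/and3P => Hd Hs /eqP ->.
  have Hd' : [&& (inr a : Pos r) != inr b, (inr a : Pos r) != inr c, (inr a : Pos r) != inr d,
    (inr b : Pos r) != inr c, (inr b : Pos r) != inr d & (inr c : Pos r) != inr d] by [].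
  split; first exact: card4.
  rewrite ind4 // /inS; wsimp.
  rewrite (eqP Hs) t0 eqxx /=.
  by [].
- case/and3P => /eqP Ht Hbd /eqP ->.
  have ab : a != b.
    by apply: contraNneq Hbd => ab; rewrite -Ht ab V_addxx t0.
  have cd : c != d by rewrite V_neq.
  have Hd' : [&& (inl a : Pos r) != inl b, (inl a : Pos r) != inr c, (inl a : Pos r) != inr d,
    (inl b : Pos r) != inr c, (inl b : Pos r) != inr d & (inr c : Pos r) != inr d] by rewrite /= ab cd.
  split; first exact: card4.
  rewrite ind4 // /inS; wsimp.
  by rewrite Ht !F2_addxx !eqxx.
Qed.


Lemma parity_l w : inS tau w -> ~~ odd #|supp (wl w)|.
Proof. by case/and3P => pl _ _; rewrite -F2_nat0 -par_card. Qed.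
Lemma parity_r w : inS tau w -> ~~ odd #|supp (wr w)|.
Proof. by case/and3P => _ pr _; rewrite -F2_nat0 -par_card. Qed.
Lemma syn_rel w : inS tau w -> syn (wr w) = tau (syn (wl w)).
Proof. by case/and3P => _ _ /eqP. Qed.

Lemma decode4 w : inS tau w -> #|supp w| = 4%N -> supp w \in SQS tau.
Proof.
move=> Hw Hc; have ex := parity_l Hw; have ey := parity_r Hw; have sr := syn_rel Hw.
rewrite (wl_ind w) (wr_ind w) in sr.
rewrite card_supp2 in Hc.
have hx : (#|supp (wl w)| <= 4)%N by rewrite -Hc leq_addr.
move: hx ex Hc sr.
case HX: #|supp (wl w)| => [|[|[|[|[|//]]]]] _ //= _; rewrite ?add0n ?add2n => HY sr.
- have [a [b [c [d [Hd HY']]]]] := card4P HY.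
  move/eqP: HX; rewrite cards_eq0 => /eqP HX.
  rewrite HX HY' ind0 syn0 ind4 // !synD !syn_e t0 in sr.
  rewrite inE; apply/or3P; apply: Or32; apply/existsP; exists a; apply/existsP; exists b;
  apply/existsP; exists c; apply/existsP; exists d.
  rewrite Hd sr eqxx /=; apply/eqP/setP => -[x|x]; rewrite ?supp_l ?supp_r ?HX ?HY' !inE /= ?orbF //.
- case/eqP/cards2P: HX => a [c [ac HX]].
  case: HY => /eqP /cards2P [b [d [bd HY]]].
  rewrite HX HY !ind2 // !synD !syn_e in sr.
  rewrite inE; apply/or3P; apply: Or33; apply/existsP; exists a; apply/existsP; exists c;
  apply/existsP; exists b; apply/existsP; exists d.
  rewrite -sr eqxx -V_neq bd /=; apply/eqP/setP => -[x|x]; rewrite ?supp_l ?supp_r ?HX ?HY !inE /= ?orbF //.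
- have [a [b [c [d [Hd HX']]]]] := card4P HX.
  move/eqP: HY; rewrite -{2}[4%N]addn0 eqn_add2l cards_eq0 => /eqP HY.
  rewrite HY HX' ind0 syn0 ind4 // !synD !syn_e in sr.
  have Hs : a + b + c + d = 0 by apply/eqP; rewrite -tau_eq0 -sr.
  rewrite inE; apply/or3P; apply: Or31; apply/existsP; exists a; apply/existsP; exists b;
  apply/existsP; exists c; apply/existsP; exists d.
  rewrite Hd Hs eqxx /=; apply/eqP/setP => -[x|x]; rewrite ?supp_l ?supp_r ?HX' ?HY !inE /= ?orbF //.
Qed.

Lemma decode_small w : inS tau w -> (#|supp (wl w)| <= 2)%N -> (#|supp (wr w)| <= 2)%N ->
  w != 0 -> #|supp w| = 4%N.
Proof.
move=> Hw hx hy wn0; have ex := parity_l Hw; have ey := parity_r Hw; have sr := syn_rel Hw.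
rewrite (wl_ind w) (wr_ind w) in sr.
rewrite card_supp2.
move: hx hy ex ey sr.
case HX: #|supp (wl w)| => [|[|[|//]]] _ //=;
case HY: #|supp (wr w)| => [|[|[|//]]] _ //= _ _ sr.
- move/eqP: HX; rewrite cards_eq0 => /eqP HX.
  move/eqP: HY; rewrite cards_eq0 => /eqP HY.
  case/negP: wn0; apply/eqP; rewrite -(ind_supp w).
  suff -> : supp w = set0 by rewrite ind0.
  by apply/setP => -[x|x]; rewrite ?supp_l ?supp_r ?HX ?HY !inE.
- move/eqP: HX; rewrite cards_eq0 => /eqP HX.
  case/eqP/cards2P: HY => b [d [bd HY]].
  rewrite HX HY ind0 syn0 !ind2 // !synD !syn_e t0 in sr.
  by move: bd; rewrite V_neq sr eqxx.
- move/eqP: HY; rewrite cards_eq0 => /eqP HY.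
  case/eqP/cards2P: HX => a [c [ac HX]].
  rewrite HX HY ind0 syn0 !ind2 // !synD !syn_e in sr.
  by move: ac; rewrite V_neq -tau_eq0 -sr eqxx.
Qed.

End P.


Section G2.
Variable T : finType.
Implicit Types (x : {ffun T -> 'F_2}).

Lemma supp1 x a : (a \in supp x) = (x a == 1).
Proof. by rewrite inE; case: (F2_cases (x a)) => ->. Qed.

Lemma card3P (A : {set T}) : (3 <= #|A|)%N -> exists a b c,
  [/\ a \in A, b \in A, c \in A & [&& a != b, a != c & b != c]].
Proof.
move=> HA.
have: (0 < #|A|)%N by lia. case/card_gt0P => a Ha.
have HA1 : (2 <= #|A :\ a|)%N by move: HA; rewrite (cardsD1 a A) Ha; lia.
have: (0 < #|A :\ a|)%N by lia. case/card_gt0P => b Hb.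
have HA2 : (1 <= #|A :\ a :\ b|)%N by move: HA1; rewrite (cardsD1 b (A :\ a)) Hb; lia.
case/card_gt0P: HA2 => c.
rewrite !inE => /and3P [cb ca cA].
move: Hb; rewrite !inE => /andP [ba bA].
by exists a, b, c; split => //; rewrite eq_sym ba eq_sym ca eq_sym cb.
Qed.

Lemma supp_dec x (a b c d : T) : a \in supp x -> b \in supp x -> c \in supp x ->
  [&& a != b, a != c & b != c] ->
  (#|supp (x + (e a + e b + e c + e d))%R| < #|supp x|)%N.
Proof.
rewrite !supp1 => /eqP xa /eqP xb /eqP xc /and3P [ab ac bc].
have sub : supp (x + (e a + e b + e c + e d)) \subset (supp x :\ a :\ b :\ c) :|: [set d].
  apply/subsetP => i; rewrite !inE !ffunE.
  case: (eqVneq i d) => [->|id]; first by rewrite orbT.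
  case: (eqVneq i a) => [->|ia]; first by rewrite ?xa ?xb ?xc ?(negbTE ab) ?(negbTE ac) ?(negbTE bc) /=.
  case: (eqVneq i b) => [->|ib]; first by rewrite ?xa ?xb ?xc ?(negbTE ab) ?(negbTE ac) ?(negbTE bc) /=.
  case: (eqVneq i c) => [->|ic]; first by rewrite ?xa ?xb ?xc ?(negbTE ab) ?(negbTE ac) ?(negbTE bc) /=.
  by rewrite /= !addr0 orbF.
have c1 := cardsD1 a (supp x).
have c2 := cardsD1 b (supp x :\ a).
have c3 := cardsD1 c (supp x :\ a :\ b).
move: c1 c2 c3; rewrite !inE xa xb xc (eq_sym b a) (eq_sym c a) (eq_sym c b) ab ac bc /= => c1 c2 c3.
have := leq_trans (subset_leq_card sub) (leq_card_setU _ _).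
rewrite cards1; lia.
Qed.

Lemma w_id8 (a c b d g h : {ffun T -> 'F_2}) :
  a + c + b + d + (a + g + b + h) = c + g + d + h.
Proof.
apply/ffunP => i; rewrite !ffunE.
by case: (F2_cases (a i)) => ->; case: (F2_cases (c i)) => ->; case: (F2_cases (b i)) => ->;
  case: (F2_cases (d i)) => ->; case: (F2_cases (g i)) => ->; case: (F2_cases (h i)) => ->;
  apply/eqP.
Qed.

End G2.

Lemma V_ACA r (x y z : V r) : (x + y) + (x + z) = y + z.
Proof. by rewrite -addrA (addrCA y) addrA V_addxx add0r. Qed.
Lemma V_K r (x y : V r) : x + (x + y) = y.
Proof. by rewrite addrA V_addxx add0r. Qed.


Ltac wsimp := rewrite ?wlD ?wrD ?wl_el ?wl_er ?wr_el ?wr_er ?wl0 ?wr0 ?addr0 ?add0r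
  ?synD ?parD ?syn_e ?par_e ?syn0 ?par0 ?addr0 ?add0r.

Section Main.
Variable r : nat.
Variable tau : {perm V r}.
Hypothesis t0 : tau 0 = 0.

Lemma inS0 : inS tau 0.
Proof. by rewrite /inS wl0 wr0 syn0 par0 t0 !eqxx. Qed.
Lemma addQ01 w B : inS tau w -> isQ0 B || isQ1 B -> inS tau (w + ind B).
Proof.
case/and3P => /eqP pl /eqP pr /eqP sr.
case/orP => /existsP [a] /existsP [b] /existsP [c] /existsP [d] /and3P [Hd /eqP Hs /eqP ->].
- have Hd' : [&& (inl a : Pos r) != inl b, (inl a : Pos r) != inl c, (inl a : Pos r) != inl d,
    (inl b : Pos r) != inl c, (inl b : Pos r) != inl d & (inl c : Pos r) != inl d] by [].
  rewrite ind4 // /inS; wsimp.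
  by rewrite pl pr sr Hs addr0 /= eqxx.
- have Hd' : [&& (inr a : Pos r) != inr b, (inr a : Pos r) != inr c, (inr a : Pos r) != inr d,
    (inr b : Pos r) != inr c, (inr b : Pos r) != inr d & (inr c : Pos r) != inr d] by [].
  rewrite ind4 // /inS; wsimp.
  by rewrite pl pr sr Hs addr0 /= eqxx.
Qed.

Lemma addQt w a c b d : inS tau w -> tau (a + c) = b + d -> b + d != 0 ->
  (forall s, tau (s + (a + c)) = tau s + tau (a + c)) ->
  inS tau (w + ind [set inl a; inl c; inr b; inr d]).
Proof.
case/and3P => /eqP pl /eqP pr /eqP sr Ht Hbd Hadd.
have ac : a != c by apply: contraNneq Hbd => ac; rewrite -Ht ac V_addxx t0.
have bd : b != d by rewrite V_neq.
have Hd' : [&& (inl a : Pos r) != inl c, (inl a : Pos r) != inr b, (inl a : Pos r) != inr d,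
    (inl c : Pos r) != inr b, (inl c : Pos r) != inr d & (inr b : Pos r) != inr d] by rewrite /= ac bd.
rewrite ind4 // /inS; wsimp.
by rewrite pl pr sr -Ht Hadd F2_addxx addr0 !eqxx.
Qed.


Variable pi : {perm Pos r}.
Hypothesis Himg : [set pi @: Q | Q : {set Pos r} in SQS tau] = SQS tau.

Lemma push Q : Q \in SQS tau -> pi @: Q \in SQS tau.
Proof. by move=> HQ; rewrite -Himg; apply: imset_f. Qed.

Lemma pull Q2 : Q2 \in SQS tau -> exists2 Q, Q \in SQS tau & Q2 = pi @: Q.
Proof. move=> HQ; have : Q2 \in [set pi @: Q | Q : {set Pos r} in SQS tau] by rewrite Himg.
by case/imsetP => Q HQ' ->; exists Q. Qed.

Lemma lemC B w : isQ0 B || isQ1 B -> inS tau w -> inS tau (w + ind (pi @: B)).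
Proof.
move=> HB Hw.
have HB1 : pi @: B \in SQS tau by apply: push; rewrite inE; case/orP: HB => ->; rewrite ?orbT.
move: (HB1); rewrite inE => /or3P [H|H|].
- by apply: addQ01 => //; rewrite H.
- by apply: addQ01 => //; rewrite H orbT.
case/existsP => a /existsP [c] /existsP [b] /existsP [d] /and3P [/eqP Ht Hbd /eqP HB1e].
rewrite HB1e; apply: addQt => // s.
set u := a + c.
have ac : a != c by apply: contraNneq Hbd => ac; rewrite -Ht /u ac V_addxx t0.
have bd : b != d by rewrite V_neq.
case: (eqVneq s 0) => [->|s0]; first by rewrite add0r t0 add0r.
case: (eqVneq s u) => [->|su]; first by rewrite !V_addxx t0.
set g := a + s; set h := b + tau s.
have Hd2 : b + tau u = d by rewrite Ht V_K.
have ag : a != g by rewrite V_neq /g V_K.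
have bh : b != h by rewrite V_neq /h V_K (tau_eq0 t0).
have cg : c != g.
  apply: contra_neq su => cg; rewrite /u cg /g V_K //.
have dh : d != h.
  apply: contra_neq su => dh; apply: (@perm_inj _ tau).
  by move: dh; rewrite -Hd2 /h => /(congr1 (fun x => b + x)); rewrite !V_K => ->.
have HB2 : [set (inl a : Pos r); inl g; inr b; inr h] \in SQS tau.
  rewrite inE; apply/or3P; apply: Or33; apply/existsP; exists a; apply/existsP; exists g;
  apply/existsP; exists b; apply/existsP; exists h.
  by rewrite /g /h !V_K eqxx (tau_eq0 t0) s0 eqxx.
have [Q2 HQ2 HQ2e] := pull HB2.
have [_ iQ2] := encode t0 HQ2.
have iz : inS tau (ind Q2 + ind B) by apply: addQ01.
set Zs := [set (inl c : Pos r); inl g; inr d; inr h].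
have dZs : [&& (inl c : Pos r) != inl g, (inl c : Pos r) != inr d, (inl c : Pos r) != inr h,
    (inl g : Pos r) != inr d, (inl g : Pos r) != inr h & (inr d : Pos r) != inr h] by rewrite /= cg dh.
have dB1 : [&& (inl a : Pos r) != inl c, (inl a : Pos r) != inr b, (inl a : Pos r) != inr d,
    (inl c : Pos r) != inr b, (inl c : Pos r) != inr d & (inr b : Pos r) != inr d] by rewrite /= ac bd.
have dB2 : [&& (inl a : Pos r) != inl g, (inl a : Pos r) != inr b, (inl a : Pos r) != inr h,
    (inl g : Pos r) != inr b, (inl g : Pos r) != inr h & (inr b : Pos r) != inr h] by rewrite /= ag bh.
have eZ : ind Zs = permw pi (ind Q2 + ind B).
  rewrite permwD !permw_ind -HQ2e HB1e addrC !ind4 //.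
  by rewrite w_id8.
set Z' := (pi^-1)%g @: Zs.
have eZ' : ind Z' = ind Q2 + ind B.
  by rewrite -permw_ind eZ permwK.
have cZ' : #|Z'| = 4%N by rewrite card_imset ?card4 //; apply: perm_inj.
have HZ' : Z' \in SQS tau.
  rewrite -(supp_ind Z'); apply: decode4 => //; last by rewrite supp_ind.
  by rewrite eZ'.
have HZs : Zs \in SQS tau.
  have -> : Zs = pi @: Z'.
    by apply: ind_inj; rewrite -permw_ind eZ' eZ.
  exact: push.
have [_ iZs] := encode t0 HZs.
have := syn_rel iZs; rewrite ind4 //; wsimp.
rewrite -Hd2 /h V_ACA /g addrA (addrC c a) -/u => H.
by rewrite (addrC s) -H addrC.
Qed.

End Main.




Lemma dist3 r (a b c : V r) : [&& a != b, a != c & b != c] ->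
  [&& a != b, a != c, a != a + b + c, b != c, b != a + b + c & c != a + b + c]
  /\ a + b + c + (a + b + c) == 0.
Proof.
case/and3P => ab ac bc; split; last by rewrite V_addxx.
rewrite ab ac bc /=.
have e1 : a + b + c + a = b + c by rewrite addrC !addrA V_addxx add0r.
have e2 : a + b + c + b = a + c by rewrite -addrA (addrC c) addrA -(addrA a b b) V_addxx addr0.
have e3 : a + b + c + c = a + b by rewrite -addrA V_addxx addr0.
rewrite (eq_sym a) (eq_sym b) (eq_sym c).
rewrite [a + b + c != a]V_neq [a + b + c != b]V_neq [a + b + c != c]V_neq e1 e2 e3.
by rewrite -[b + c != 0]V_neq -[a + c != 0]V_neq -[a + b != 0]V_neq ab ac bc.
Qed.

Section Main2.
Variable r : nat.
Variable tau : {perm V r}.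
Hypothesis t0 : tau 0 = 0.
Variable pi : {perm Pos r}.
Hypothesis Himg : [set pi @: Q | Q : {set Pos r} in SQS tau] = SQS tau.

Lemma mainB n w : (#|supp w| <= n)%N -> inS tau w -> inS tau (permw pi w).
Proof.
elim: n w => [|n IH] w hw Hw.
  have : supp w = set0 by apply/eqP; rewrite -cards_eq0 -leqn0.
  by rewrite -{2}(ind_supp w) => ->; rewrite ind0 permw0 inS0.
have hc := card_supp2 w.
case: (leqP 3 #|supp (wl w)|) => hX.
  have [a [b [c [Ha [Hb Hc Hd]]]]] := card3P hX.
  have [Hd' Hs] := dist3 Hd.
  set B := [set (inl a : Pos r); inl b; inl c; inl (a + b + c)].
  have QB : isQ0 B.
    by apply/existsP; exists a; apply/existsP; exists b; apply/existsP; exists c;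
    apply/existsP; exists (a + b + c); rewrite Hd' Hs eqxx.
  have Hd2 : [&& (inl a : Pos r) != inl b, (inl a : Pos r) != inl c, (inl a : Pos r) != inl (a + b + c),
    (inl b : Pos r) != inl c, (inl b : Pos r) != inl (a + b + c) & (inl c : Pos r) != inl (a + b + c)] by [].
  have Hw' : inS tau (w + ind B) by apply: addQ01 => //; rewrite QB.
  have hw' : (#|supp (w + ind B)%R| <= n)%N.
    have := supp_dec (a + b + c) Ha Hb Hc Hd.
    rewrite card_supp2 /B ind4 // !wlD !wrD !wl_el !wr_el !addr0.
    move=> H; rewrite -ltnS; apply: (leq_trans _ hw); by rewrite hc ltn_add2r.
  have -> : w = (w + ind B) + ind B by rewrite -addrA w_addxx addr0.
  rewrite permwD permw_ind; apply: lemC => //; first by rewrite QB.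
  exact: IH.
case: (leqP 3 #|supp (wr w)|) => hY.
  have [a [b [c [Ha [Hb Hc Hd]]]]] := card3P hY.
  have [Hd' Hs] := dist3 Hd.
  set B := [set (inr a : Pos r); inr b; inr c; inr (a + b + c)].
  have QB : isQ1 B.
    by apply/existsP; exists a; apply/existsP; exists b; apply/existsP; exists c;
    apply/existsP; exists (a + b + c); rewrite Hd' Hs eqxx.
  have Hd2 : [&& (inr a : Pos r) != inr b, (inr a : Pos r) != inr c, (inr a : Pos r) != inr (a + b + c),
    (inr b : Pos r) != inr c, (inr b : Pos r) != inr (a + b + c) & (inr c : Pos r) != inr (a + b + c)] by [].
  have Hw' : inS tau (w + ind B) by apply: addQ01 => //; rewrite QB orbT.
  have hw' : (#|supp (w + ind B)%R| <= n)%N.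
    have := supp_dec (a + b + c) Ha Hb Hc Hd.
    rewrite card_supp2 /B ind4 // !wlD !wrD !wl_er !wr_er !addr0.
    move=> H; rewrite -ltnS; apply: (leq_trans _ hw); by rewrite hc ltn_add2l.
  have -> : w = (w + ind B) + ind B by rewrite -addrA w_addxx addr0.
  rewrite permwD permw_ind; apply: lemC => //; first by rewrite QB orbT.
  exact: IH.
case: (eqVneq w 0) => [->|wn0]; first by rewrite permw0 inS0.
have c4 : #|supp w| = 4%N by apply: (decode_small t0 Hw).
have HQ := decode4 t0 Hw c4.
have [_ HQ'] := encode t0 (push Himg HQ).
by rewrite -(ind_supp w) permw_ind.
Qed.

End Main2.

Unset Implicit Arguments.

Theorem corollary2 (r : nat) (tau : {perm V r}) :
  (1 <= r)%N -> tau 0 = 0 ->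
  (PAut (Stau tau) \isog AutSys (SQS tau))%g.
Proof.
move=> _ t0.
have E : PAut (Stau tau) = AutSys (SQS tau).
  apply/setP => pi; rewrite !inE; apply/eqP/eqP => H.
    apply/eqP; rewrite eqEcard card_imset ?leqnn ?andbT; last exact: (imset_inj (@perm_inj _ pi)).
    apply/subsetP => Q' /imsetP [Q HQ ->].
    have [c4 iQ] := encode t0 HQ.
    have : permw pi (ind Q) \in Stau tau by rewrite -H; apply: imset_f; rewrite memS.
    rewrite memS // permw_ind => iQ'.
    rewrite -(supp_ind (pi @: Q)); apply: (decode4 t0 iQ').
    by rewrite supp_ind card_imset //; exact: perm_inj.
  apply/eqP; rewrite eqEcard card_imset ?leqnn ?andbT; last exact: (can_inj (permwK pi)).
  apply/subsetP => w' /imsetP [w Hw ->]; rewrite memS // in Hw *.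
  rewrite memS //; exact: (mainB t0 H (leqnn _) Hw).
rewrite E; apply/existsP; exists [ffun x => x]; apply/andP; split.
  by apply/morphicP => x y _ _; rewrite !ffunE.
apply/eqP; rewrite -[in RHS](imset_id ((AutSys (SQS tau))^#)%g).
by apply: eq_imset => x; rewrite ffunE.
Qed.
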